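(* Let $N=N_1+N_2$ with $N_1\ge0$, $N_2\ge1$, $N<L$, let $Y=(y_1,\dots,y_{N_2})\in\mathbb Z^{N_2}$ with $-L+N_1+1\le y_1<\cdots<y_{N_2}=0$, let $z_1\ne0$, and let $w_1,\dots,w_N\in\mathcal S_{z_1}$. Then $$\sum_{\tilde Y\in\tilde{\mathcal Y}_{N_1}(L;y_1)}\det\big[w_i^j(w_i+1)^{\tilde y_j-j}1_{j\le N_1}+w_i^j(w_i+1)^{y_{j-N_1}-j}1_{j>N_1}\big]_{i,j=1}^N=\det\big[w_i^{j-1}(w_i+1)^{y_1-N_1}1_{j\le N_1}+w_i^j(w_i+1)^{y_{j-N_1}-j}1_{j>N_1}\big]_{i,j=1}^N.$$
   Context: $\mathcal S_z$ is the set of roots of $w^N(w+1)^{L-N}=z^L$. $\tilde{\mathcal Y}_{N_1}(L;y_1)=\{(\tilde y_1,\dots,\tilde y_{N_1})\in\mathbb Z^{N_1}:-L+1\le\tilde y_1<\cdots<\tilde y_{N_1}\le y_1-1\}$. *)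

(* Defs.v *)
From HB Require Import structures.
From mathcomp Require Import all_boot all_order all_algebra.
From mathcomp Require Export complex.
Set Implicit Arguments. Unset Strict Implicit. Unset Printing Implicit Defensive.
Import Order.TTheory GRing.Theory Num.Theory.
Local Open Scope ring_scope.

(* Complex numbers are modelled as R[i] = complex R for a real closed field R
   (for R the real numbers this is exactly C). *)

(* w \in S_z  :<=>  w^N (w+1)^(L-N) = z^L   (here N < L, so L-N is a nat). *)
Definition in_S (R : rcfType) (N L : nat) (z w : R[i]) : Prop :=
  w ^+ N * (w + 1) ^+ (L - N) = z ^+ L.

(* The index set  tilde Y_{N1}(L; y1) = { (ty_1 < ... < ty_{N1}) in Z^{N1} :
   -L+1 <= ty_1 < ... < ty_{N1} <= y1 - 1 }, enumerated as a duplicate-free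
   list of N1-tuples of integers (0-based: ty_{j+1} = t`_j).  We enumerate all
   tuples with entries -L+1+i, i < |y1| + L (a superset of the allowed range,
   injectively), and keep exactly those satisfying the defining condition. *)
Definition Ytilde (N1 L : nat) (y1 : int) : seq (N1.-tuple int) :=
  [seq t <- [seq map_tuple (fun i : 'I_(absz y1 + L) => - (L%:Z) + 1 + (i : nat)%:Z) u
            | u <- enum {: N1.-tuple 'I_(absz y1 + L)}]
   | [&& sorted <%R (tval t),
         all (fun a => - (L%:Z) + 1 <= a) (tval t) &
         all (fun a => a <= y1 - 1) (tval t)]].

(* Main.v *)
Require Import Defs.
From HB Require Import structures.
From mathcomp Require Import all_boot all_order all_algebra.
From mathcomp Require Import complex.
From mathcomp Require Import zify ring.
Import Order.TTheory GRing.Theory Num.Theory.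
Local Open Scope ring_scope.

Module Aux.
Set Implicit Arguments. Unset Strict Implicit.

Lemma det_col_eq (F : comPzRingType) n (A : 'M[F]_n) (j1 j2 : 'I_n) :
  j1 != j2 -> (forall i, A i j1 = A i j2) -> \det A = 0.
Proof.
move=> hne he; rewrite -det_tr; apply: (determinant_alternate hne) => k.
by rewrite !mxE.
Qed.

Section Dets.
Variables (F : fieldType) (N1 N : nat) (w : 'I_N -> F) (rest : 'I_N -> 'I_N -> F).
Hypothesis hN : (N1 <= N)%N.

Definition M (c : nat -> 'I_N -> F) : 'M[F]_N :=
  \matrix_(i < N, j < N) if (j < N1)%N then c j i else rest i j.
Definition D c := \det (M c).
Definition upd (c : nat -> 'I_N -> F) (m : nat) (x : 'I_N -> F) :=
  fun j => if j == m then x else c j.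

Lemma D_ext c1 c2 : (forall j i, (j < N1)%N -> c1 j i = c2 j i) -> D c1 = D c2.
Proof.
move=> h; rewrite /D; congr (\det _); apply/matrixP => i j; rewrite !mxE.
by case: ifP => // hj; rewrite h.
Qed.

Lemma D_upd c m (hm : (m < N1)%N) x :
  D (upd c m x) = \sum_i x i * cofactor (M (upd c m (fun _ => 0))) i (Ordinal (leq_trans hm hN)).
Proof.
rewrite /D (expand_det_col _ (Ordinal (leq_trans hm hN))); apply: eq_bigr => i _.
rewrite mxE /= hm /upd eqxx; congr (_ * _); rewrite /cofactor; congr (_ * \det _).
apply/matrixP => a b; rewrite !mxE.
rewrite /upd /=; have := neq_lift (Ordinal (leq_trans hm hN)) b; rewrite eq_sym -val_eqE /= => /negbTE ->.
by [].
Qed.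

Lemma D_eqcol c m1 m2 : (m1 < N1)%N -> (m2 < N1)%N -> m1 != m2 ->
  (forall i, c m1 i = c m2 i) -> D c = 0.
Proof.
move=> h1 h2 hne he.
apply: (@det_col_eq _ _ _ (Ordinal (leq_trans h1 hN)) (Ordinal (leq_trans h2 hN))).
  by rewrite -val_eqE.
by move=> i; rewrite !mxE /= h1 h2.
Qed.

Lemma D_restcol c m (hm : (m < N1)%N) (j2 : 'I_N) : (N1 <= j2)%N ->
  D (upd c m (fun i => rest i j2)) = 0.
Proof.
move=> hj.
apply: (@det_col_eq _ _ _ (Ordinal (leq_trans hm hN)) j2).
  rewrite -val_eqE /=; apply/eqP => e; move: hm; rewrite e; lia.
move=> i; rewrite !mxE /= hm /upd eqxx.
by have -> : (j2 < N1)%N = false by lia.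
Qed.

End Dets.

Fixpoint incs (K : nat) (lo : int) (n : nat) : seq (seq int) :=
  match K with
  | 0 => [:: [::]]
  | K'.+1 => [seq (lo + i%:Z) :: s | i <- index_iota 0 n,
                s <- incs K' (lo + i%:Z + 1) (n - i.+1)]
  end.

Section Cols.
Variables (F : fieldType) (N1 N : nat) (w : 'I_N -> F) (rest : 'I_N -> 'I_N -> F).
Hypothesis hN : (N1 <= N)%N.
Hypothesis hu : forall i, w i + 1 != 0.
Variable y1 : int.

Definition v (s : int) (j : nat) : 'I_N -> F := fun i => w i ^+ j * (w i + 1) ^ s.
Definition cc j (t : int) := v (t - (j.+1)%:Z) j.+1.
Definition cst j := v (y1 - (j.+1)%:Z) j.
Definition colp (p : seq int) : nat -> 'I_N -> F :=
  fun j => if (j < size p)%N then cc j (p`_j) else cst j.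

Notation D := (D N1 rest).
Notation upd := (@upd F N).

Lemma v_succ s j i : v (s + 1) j i = v s j i + v s j.+1 i.
Proof.
rewrite /v exprzDr ?unitfE ?hu // expr1z exprS; ring.
Qed.

Lemma D_lin c m (hm : (m < N1)%N) (x y : 'I_N -> F) a :
  D (upd c m (fun i => x i - a * y i)) = D (upd c m x) - a * D (upd c m y).
Proof.
rewrite !(D_upd rest hN _ hm) mulr_sumr -sumrB; apply: eq_bigr => i _; ring.
Qed.

Lemma lemA p lo n : (size p < N1)%N -> lo + n%:Z = y1 ->
  \sum_(0 <= k < n) D (colp (rcons p (lo + k%:Z))) =
  D (colp p) - D (upd (colp p) (size p) (v (lo - (size p).+1%:Z) (size p))).
Proof.
move=> hm hlo.
have e1 : forall a, D (colp (rcons p a)) = D (upd (colp p) (size p) (cc (size p) a)).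
  move=> a; apply: D_ext => j i hj; rewrite /colp /upd size_rcons nth_rcons.
  case: (ltngtP j (size p)) => hjp.
  - by have -> : (j < (size p).+1)%N by lia.
  - by have -> : (j < (size p).+1)%N = false by lia.
  - by rewrite hjp ltnSn ?eqxx ?ltnn.
under eq_bigr => k _ do rewrite e1 (D_upd rest hN _ hm).
rewrite exchange_big /=.
have -> : D (colp p) = D (upd (colp p) (size p) (cst (size p))).
  apply: D_ext => j i hj; rewrite /colp /upd; case: eqP => // ->; by rewrite ltnn.
rewrite !(D_upd rest hN _ hm) -sumrB; apply: eq_bigr => i _.
rewrite -mulr_suml -mulrBl; congr (_ * _).
rewrite (telescope_sumr_eq (fun k => v (lo + k%:Z - (size p).+1%:Z) (size p) i)) //.
  rewrite /cst -hlo addr0; congr (v _ _ _ - v _ _ _); lia.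
move=> k _; rewrite /cc.
have -> : lo + k.+1%:Z - (size p).+1%:Z = (lo + k%:Z - (size p).+1%:Z) + 1 by lia.
rewrite v_succ; ring.
Qed.


Lemma lemB K p lo n : (size p + K.+1 <= N1)%N -> lo + n%:Z = y1 ->
  \sum_(s <- incs K.+1 lo n) D (colp (p ++ s)) =
  D (colp p) - D (upd (colp p) (size p) (v (lo - (size p).+1%:Z) (size p))).
Proof.
elim: K p lo n => [|K IH] p lo n hK hlo.
  have hm : (size p < N1)%N by lia.
  rewrite big_allpairs_dep /= -(@lemA p lo n hm hlo).
  under eq_bigr => k _ do rewrite big_seq1 cats1.
  by [].
have hm : (size p < N1)%N by lia.
  rewrite big_allpairs_dep /= -(@lemA p lo n hm hlo).
rewrite big_seq [RHS]big_seq; apply: eq_bigr => k; rewrite mem_index_iota => hk.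
under eq_bigr => s _ do rewrite -cat_rcons.
rewrite IH; last 2 first.
- by rewrite size_rcons; lia.
- lia.
rewrite [X in _ - X](_ : _ = 0) ?subr0 //.
apply: (D_eqcol rest hN (m1 := size p) (m2 := (size (rcons p (lo + k%:Z))))).
- lia.
- rewrite size_rcons; lia.
- by rewrite size_rcons; apply/eqP; lia.
move=> i; rewrite /upd size_rcons.
have -> : ((size p).+1 == (size p).+1) = true by apply/eqP.
have -> : (size p == (size p).+1) = false by elim: (size p).
rewrite /colp size_rcons ltnSn nth_rcons ltnn.
have -> : (size p == size p) = true by apply/eqP.
rewrite /cc; congr (v _ _ _); lia.
Qed.

Lemma lemC : D cst = D (fun j => v (y1 - N1%:Z) j).
Proof.
pose h k := fun j => if (j < k)%N then cst j else v (y1 - N1%:Z) j.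
have step : forall k, (k < N1)%N -> D (h k.+1) = D (h k).
  move=> k hk.
  have -> : D (h k.+1) = D (upd (h k) k (cst k)).
    apply: D_ext => j i _; rewrite /h /upd; case: (ltngtP j k) => hj.
    - by have -> : (j < k.+1)%N by lia.
    - by have -> : (j < k.+1)%N = false by lia; have -> : (j == k) = false by lia.
    - by rewrite hj ltnSn ?eqxx ?ltnn.
  have -> : D (h k) = D (upd (h k) k (v (y1 - N1%:Z) k)).
    apply: D_ext => j i _; rewrite /h /upd; case: eqP => // ->; by rewrite ltnn.
  set n := (N1 - k.+1)%N.
  have ec : forall i, cst k i = \sum_(q < n.+1) v (y1 - N1%:Z) (k + q) i *+ 'C(n, q).
    move=> i; rewrite /cst /v.
    have -> : y1 - k.+1%:Z = (y1 - N1%:Z) + n%:Z by rewrite /n; lia.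
    rewrite exprzDr ?unitfE ?hu // -exprnP exprD1n.
    rewrite mulr_sumr mulr_sumr; apply: eq_bigr => q _.
    rewrite !mulrnAr; congr (_ *+ _); rewrite exprD; ring.
  rewrite !(D_upd rest hN _ hk).
  under eq_bigr => i _ do rewrite ec mulr_suml.
  rewrite exchange_big big_ord_recl /= ?addn0.
  rewrite [X in _ + X]big1 ?addr0; last first.
    move=> q _.
    have -> : \sum_i v (y1 - N1%:Z) (k + bump 0 q) i *+ 'C(n, bump 0 q) *
        cofactor (M N1 rest (upd (h k) k (fun=> 0))) i (Ordinal (leq_trans hk hN)) =
      (\sum_i v (y1 - N1%:Z) (k + bump 0 q) i *
        cofactor (M N1 rest (upd (h k) k (fun=> 0))) i (Ordinal (leq_trans hk hN))) *+ 'C(n, bump 0 q).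
      by rewrite -sumrMnl; apply: eq_bigr => i _; rewrite mulrnAl.
    rewrite -(D_upd rest hN _ hk).
    rewrite (D_eqcol rest hN (m1 := k) (m2 := (k + bump 0 q)%N)) ?mul0rn //.
    - have := ltn_ord q; rewrite /bump /n; lia.
    - rewrite /bump; apply/eqP; lia.
    - move=> i; rewrite /upd eqxx.
      have -> : (k + bump 0 q == k)%N = false by rewrite /bump; lia.
      by rewrite /h; have -> : (k + bump 0 q < k)%N = false by lia.
  by apply: eq_bigr => i _; rewrite ?addn0 bin0 mulr1n.
have -> : D cst = D (h N1) by apply: D_ext => j i hj; rewrite /h hj.
have gen : forall k, (k <= N1)%N -> D (h k) = D (h 0).
  elim=> // k IHk hk; rewrite step //; apply: IHk; lia.
rewrite gen //; apply: D_ext => j i _; by rewrite /h.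
Qed.

End Cols.

Lemma mem_incs K lo n s : (s \in incs K lo n) =
  [&& size s == K, sorted <%R s & all (fun a => (lo <= a) && (a < lo + n%:Z)) s].
Proof.
elim: K lo n s => [|K IH] lo n s.
  by case: s => [|a s] //=; rewrite inE.
apply/allpairsPdep/idP.
  case=> i [t [hi ht ->]]; rewrite IH in ht; move: hi; rewrite mem_index_iota => hi.
  case/and3P: ht => /eqP hs hsort hall.
  rewrite /= hs eqxx /= (path_sortedE lt_trans) hsort andbT.
  apply/andP; split.
    by apply/allP => a ha; move: (allP hall a ha) => /andP [h1 h2]; lia.
  apply/andP; split; first by apply/andP; split; lia.
  by apply/allP => a ha; move: (allP hall a ha) => /andP [h1 h2]; lia.
case: s => [|a t] //=.
case/and3P => /eqP [] hs; rewrite (path_sortedE lt_trans) => /andP [hlt hsort] /andP [/andP [h1 h2] hall].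
exists (absz (a - lo)), t; split.
- rewrite mem_index_iota; lia.
- rewrite IH hs eqxx hsort /=; apply/allP => b hb.
  move: (allP hall b hb) (allP hlt b hb) => /andP [h3 h4] h5; apply/andP; split; lia.
- congr (_ :: _); lia.
Qed.

Lemma uniq_incs K lo n : uniq (incs K lo n).
Proof.
elim: K lo n => [|K IH] lo n //=.
apply: allpairs_uniq_dep; first exact: iota_uniq.
  by move=> i _; exact: IH.
move=> [i1 s1] [i2 s2] _ _ /= [] /addrI /eqP; rewrite eqz_nat => /eqP ei es.
by subst.
Qed.

Lemma mem_Yt N1 L y1 s : (0 < L)%N -> - (L%:Z) + 1 <= y1 ->
  (s \in map val (Ytilde N1 L y1)) =
  [&& size s == N1, sorted <%R s &
      all (fun a => (- (L%:Z) + 1 <= a) && (a < - (L%:Z) + 1 + (absz (y1 + L%:Z - 1)%R)%:Z)) s].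
Proof.
move=> hL hy.
apply/mapP/idP.
  case=> t; rewrite mem_filter => /andP [/and3P [hs /allP h1 /allP h2] _] ->.
  rewrite size_tuple eqxx hs /=; apply/allP => a ha.
  by move: (h1 a ha) (h2 a ha) => ha1 ha2; apply/andP; split; lia.
case/and3P => /eqP hs hsort /allP hall.
have HM : (0 < absz y1 + L)%N by lia.
pose g := fun a : int => (insubd (Ordinal HM) (absz (a + L%:Z - 1)%R) : 'I_(absz y1 + L)).
have hsz : size (map g s) == N1 by rewrite size_map hs.
pose f := (fun i : 'I_(absz y1 + L) => - (L%:Z) + 1 + (i : nat)%:Z).
have e : map f (map g s) = s.
  rewrite -map_comp; apply: map_id_in => a ha /=.
  move: (hall a ha) => /andP [ha1 ha2].
  rewrite /f /g val_insubd.
  have -> : (absz (a + L%:Z - 1)%R < absz y1 + L)%N by lia.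
  lia.
exists (map_tuple f (Tuple hsz)); last by rewrite /= e.
rewrite mem_filter /= e hsort /=; apply/andP; split.
  by apply/andP; split; apply/allP => a ha; move: (hall a ha) => /andP [h1 h2]; lia.
apply/mapP; exists (Tuple hsz) => //.
by rewrite mem_enum.
Qed.

Lemma uniq_Yt N1 L y1 : uniq (map val (Ytilde N1 L y1)).
Proof.
rewrite (map_inj_uniq val_inj) filter_uniq // map_inj_uniq ?enum_uniq //.
move=> u1 u2 /(congr1 val) /= /inj_map h; apply: val_inj; apply: h => i j /=.
by move/addrI/eqP; rewrite eqz_nat => /eqP; apply: val_inj.
Qed.

Lemma sum_Yt (V : nmodType) N1 L y1 (G : seq int -> V) : (0 < L)%N -> - (L%:Z) + 1 <= y1 ->
  \sum_(t <- Ytilde N1 L y1) G (val t) =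
  \sum_(s <- incs N1 (- (L%:Z) + 1) (absz (y1 + L%:Z - 1)%R)) G s.
Proof.
move=> hL hy; rewrite -(big_map val predT G); apply: perm_big.
apply: uniq_perm; [exact: uniq_Yt | exact: uniq_incs|].
by move=> s; rewrite mem_Yt // mem_incs.
Qed.
End Aux.
Import Aux.

Theorem lemma11p8 (R : rcfType) (N1 N2 L : nat) (Y : seq int) (z : R[i])
    (w : 'I_(N1 + N2) -> R[i]) :
  (1 <= N2)%N -> (N1 + N2 < L)%N ->
  size Y = N2 ->
  sorted <%R Y ->
  - (L%:Z) + (N1%:Z) + 1 <= Y`_0 ->
  Y`_(N2.-1) = 0 ->
  z != 0 ->
  (forall i, in_S (N1 + N2) L z (w i)) ->
  \sum_(t <- Ytilde N1 L (Y`_0))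
     \det (\matrix_(i < N1 + N2, j < N1 + N2)
             (if (j < N1)%N
              then w i ^+ j.+1 * (w i + 1) ^ (t`_j - (j.+1)%:Z)
              else w i ^+ j.+1 * (w i + 1) ^ (Y`_(j - N1) - (j.+1)%:Z)))
  = \det (\matrix_(i < N1 + N2, j < N1 + N2)
             (if (j < N1)%N
              then w i ^+ j * (w i + 1) ^ (Y`_0 - N1%:Z)
              else w i ^+ j.+1 * (w i + 1) ^ (Y`_(j - N1) - (j.+1)%:Z))).
Proof.
move=> hN2 hNL hY hsort hy1 hlast hz hS.
set y1 := Y`_0.
pose rest := fun i (j : 'I_(N1 + N2)) => w i ^+ j.+1 * (w i + 1) ^ (Y`_(j - N1) - (j.+1)%:Z).
have hN : (N1 <= N1 + N2)%N by lia.
have hu : forall i, w i + 1 != 0.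
  move=> i; apply/eqP => e; move: (hS i); rewrite /in_S e expr0n.
  have -> : (L - (N1 + N2) == 0)%N = false by lia.
  rewrite mulr0 => /esym/eqP; rewrite expf_eq0 (negbTE hz) andbF.
  by [].
have hL : (0 < L)%N by lia.
have hy : - (L%:Z) + 1 <= y1 by lia.
rewrite (eq_bigr (fun t => D N1 rest (colp w y1 (val t)))); last first.
  move=> t _; rewrite /D /M; congr (\det _); apply/matrixP => i j; rewrite !mxE.
  by case: ifP => // hj; rewrite /colp size_tuple hj.
rewrite (sum_Yt N1 (fun s => D N1 rest (colp w y1 s))) //.
have -> : \det (\matrix_(i < N1 + N2, j < N1 + N2)
             (if (j < N1)%N
              then w i ^+ j * (w i + 1) ^ (y1 - N1%:Z)
              else w i ^+ j.+1 * (w i + 1) ^ (Y`_(j - N1) - (j.+1)%:Z)))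
   = D N1 rest (fun j => v w (y1 - N1%:Z) j).
  by rewrite /D /M; congr (\det _); apply/matrixP => i j; rewrite !mxE.
rewrite -(lemC rest hN hu).
have -> : D N1 rest (cst w y1) = D N1 rest (colp w y1 [::]).
  by apply: D_ext => j i hj.
set lo := - (L%:Z) + 1.
set n := absz (y1 + L%:Z - 1)%R.
have hlo : lo + n%:Z = y1 by rewrite /lo /n; lia.
case: (posnP N1) => hN1.
  have -> : incs N1 lo n = [:: [::]] by rewrite hN1.
  by rewrite big_seq1.
have -> : incs N1 lo n = incs N1.-1.+1 lo n by rewrite prednK.
rewrite (@lemB _ _ _ _ rest hN hu _ N1.-1 [::] lo n) /=; last 2 first.
- by rewrite prednK.
- exact: hlo.
rewrite [X in _ - X](_ : _ = 0) ?subr0 //.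
have hlast' : ((N1 + N2).-1 < N1 + N2)%N by lia.
pose jl := Ordinal hlast'.
have h0 : (0 < N1)%N by [].
have : z ^+ L * D N1 rest (upd (colp w y1 [::]) 0 (v w (lo - 1) 0)) = 0.
  rewrite -(D_restcol rest hN (colp w y1 [::]) h0 (j2 := jl)); last by rewrite /=; lia.
  rewrite !(D_upd rest hN _ h0) mulr_sumr; apply: eq_bigr => i _; rewrite mulrA; congr (_ * _).
  rewrite /rest /= prednK; last by lia.
  have -> : ((N1 + N2).-1 - N1)%N = N2.-1 by lia.
  rewrite hlast /v expr0 mul1r.
  move: (hS i); rewrite /in_S => <-.
  rewrite -mulrA [(w i + 1) ^+ _]exprnP -exprzDr ?unitfE ?hu //; congr (_ * _ ^ _); rewrite /lo; lia.
by move/eqP; rewrite mulf_eq0 expf_eq0 (negbTE hz) andbF /= => /eqP.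
Qed.
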